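(* Let $\mathbf{M}^*\in\mathbb{R}^{d_1\times d_2}$ have rank $r$, let $f(\mathbf{U},\mathbf{V})=\frac12\|\mathbf{U}\mathbf{V}^\top-\mathbf{M}^*\|_F^2$ for $\mathbf{U}\in\mathbb{R}^{d_1\times r}$, $\mathbf{V}\in\mathbb{R}^{d_2\times r}$, and let $\epsilon>0$. Suppose $(\mathbf{U},\mathbf{V})$ is a stationary point of $f$ such that $\|\mathbf{U}^\top\mathbf{U}-\mathbf{V}^\top\mathbf{V}\|_F\le\epsilon$. Then either $\|\mathbf{U}\mathbf{V}^\top-\mathbf{M}^*\|_F\le\epsilon$, or $(\mathbf{U},\mathbf{V})$ is a strict saddle point of $f$.
   Context: A stationary point is a point where the gradient of $f$ vanishes. A saddle point of $f$ is strict if the Hessian of $f$ at that point has a negative eigenvalue. $\|\cdot\|_F$ is the Frobenius norm. *)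

(* Defs.v *)
From HB Require Import structures.
From mathcomp Require Import all_boot all_order all_algebra.
From mathcomp Require Import all_classical all_reals all_analysis.
Set Implicit Arguments. Unset Strict Implicit. Unset Printing Implicit Defensive.
Import Order.TTheory GRing.Theory Num.Theory.
Local Open Scope ring_scope.

Section Defs.
Variable R : realType.

Definition frob m n (A : 'M[R]_(m, n)) : R :=
  Num.sqrt (\sum_(i < m) \sum_(j < n) A i j ^+ 2).

Definition ebasis N (i : 'I_N) : 'rV[R]_N := delta_mx 0 i.

Definition pderiv N (g : 'rV[R]_N -> R) (x : 'rV[R]_N) (i : 'I_N) : R :=
  derive1 (fun t : R => g (x + t *: ebasis i)) 0.

Definition gradient N (g : 'rV[R]_N -> R) (x : 'rV[R]_N) : 'rV[R]_N :=
  \row_i pderiv g x i.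

Definition hessian N (g : 'rV[R]_N -> R) (x : 'rV[R]_N) : 'M[R]_N :=
  \matrix_(i, j) pderiv (fun y => pderiv g y i) x j.

Definition stationary_point N (g : 'rV[R]_N -> R) (x : 'rV[R]_N) : Prop :=
  gradient g x = 0.

Definition strict_saddle N (g : 'rV[R]_N -> R) (x : 'rV[R]_N) : Prop :=
  stationary_point g x /\ exists lam : R, lam < 0 /\ eigenvalue (hessian g x) lam.

(* The point (U, V) is encoded as a single vector of R^(d1*r + d2*r):
   x = [mxvec U | mxvec V]. *)
Definition Uof d1 d2 r (x : 'rV[R]_(d1 * r + d2 * r)) : 'M[R]_(d1, r) :=
  vec_mx (lsubmx x).
Definition Vof d1 d2 r (x : 'rV[R]_(d1 * r + d2 * r)) : 'M[R]_(d2, r) :=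
  vec_mx (rsubmx x).
Definition pack d1 d2 r (U : 'M[R]_(d1, r)) (V : 'M[R]_(d2, r))
  : 'rV[R]_(d1 * r + d2 * r) := row_mx (mxvec U) (mxvec V).

Definition fobj d1 d2 r (Mstar : 'M[R]_(d1, d2))
  (x : 'rV[R]_(d1 * r + d2 * r)) : R :=
  2^-1 * frob (@Uof d1 d2 r x *m (@Vof d1 d2 r x)^T - Mstar) ^+ 2.

End Defs.

(* Main.v *)
Set Warnings "-all".
Require Import Defs.
From HB Require Import structures.
From mathcomp Require Import all_boot all_order all_algebra.
From mathcomp Require Import all_classical all_reals all_analysis.
From mathcomp Require Import ring lra.
From mathcomp Require Import complex spectral sesquilinear.
Import Order.TTheory GRing.Theory Num.Theory.
Set Implicit Arguments. Unset Strict Implicit. Unset Printing Implicit Defensive.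
Local Open Scope ring_scope.


Lemma sym_neg (R : rcfType) n (H : 'M[R]_n) (w : 'rV[R]_n) :
  H^T = H -> (w *m H *m w^T) 0 0 < 0 -> exists lam, lam < 0 /\ eigenvalue H lam.
Proof.
move=> Hsym Hw.
pose f := real_complex R.
have freal : forall x : R, f x \is Num.real by move=> x; apply/complex_realP; exists x.
pose Hc := map_mx f H.
have Hh : Hc \is hermsymmx.
  apply: realsym_hermsym.
    apply/is_hermitianmxP; rewrite expr0 scale1r map_mx_id // /Hc map_trmx Hsym //.
  by apply/mxOverP => i j; rewrite mxE.
have /orthomx_spectralP Hdec := hermitian_normalmx Hh.
set P := spectralmx Hc in Hdec; set D := spectral_diag Hc in Hdec.
have Dreal : D \is a mxOver Num.real := hermitian_spectral_diag_real Hh.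
have Pu : P \is unitarymx := spectral_unitarymx Hc.
have Punit : P \in unitmx := spectral_unit Hc.
case: (boolP [exists i, complex.Re (D 0 i) < 0]).
  move=> /existsP [i Hi]; exists (complex.Re (D 0 i)); split => //.
  have [k Hk] : exists k, D 0 i = k%:C%C.
    by apply/complex_realP; move/mxOverP: Dreal; apply.
  rewrite -(eigenvalue_map f) Hk /=.
  rewrite -/Hc -[k%:C%C]Hk.
  apply/eigenvalueP; exists (row i P).
    have : P *m Hc = diag_mx D *m P by rewrite {1}Hdec !mulmxA mulmxV // mul1mx.
    move=> /(congr1 (row i)); rewrite row_mul mul_diag_mx => ->.
    by apply/rowP => j; rewrite !mxE.
  apply/negP => /eqP Hr.
  move/unitarymxP: Pu => /(congr1 (row i)); rewrite row_mul Hr mul0mx row1 => /rowP /(_ i).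
  by rewrite !mxE !eqxx /= => /esym/eqP; rewrite oner_eq0.
move=> /existsPn HD; exfalso; move: Hw; apply/negP; rewrite -leNgt -ler0c.
pose wc := map_mx f w.
have wcc : map_mx Num.conj wc = wc.
  by apply/matrixP => i j; rewrite !mxE conj_Creal.
have -> : (((w *m H *m w^T) 0 0)%:C)%C = (wc *m Hc *m (map_mx Num.conj wc^T)) 0 0.
  have e : (map_mx f (w *m H *m w^T)) 0 0 = f ((w *m H *m w^T) 0 0) by rewrite mxE.
  by rewrite -[LHS]/(f _) -e !map_mxM -!map_trmx wcc.
rewrite Hdec invmx_unitary //.
set y := wc *m map_mx Num.conj P^T.
have -> : wc *m (map_mx Num.conj P^T *m diag_mx D *m P) *m map_mx Num.conj wc^T
   = y *m diag_mx D *m map_mx Num.conj y^T.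
  by rewrite /y !trmx_mul !map_mxM trmxCK !mulmxA.
rewrite mul_mx_diag mxE; apply: sumr_ge0 => j _; rewrite !mxE.
rewrite mulrAC; apply: mulr_ge0; first exact: mul_conjC_ge0.
have [k Hk] : exists k, D 0 j = k%:C%C.
  by apply/complex_realP; move/mxOverP: Dreal; apply.
have := HD j; rewrite Hk /= -leNgt => Hk0.
by rewrite ler0c.
Qed.


Section IP.
Variable R : realType.

Definition ip m n (A B : 'M[R]_(m, n)) : R := \sum_i \sum_j A i j * B i j.

Lemma ip_tr m n (A B : 'M[R]_(m, n)) : ip A B = mxtrace (A *m B^T).
Proof.
rewrite /ip /mxtrace; apply: eq_bigr => i _; rewrite mxE.
by apply: eq_bigr => j _; rewrite !mxE.
Qed.

Lemma ipC m n (A B : 'M[R]_(m, n)) : ip A B = ip B A.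
Proof. by rewrite /ip; apply: eq_bigr => i _; apply: eq_bigr => j _; rewrite mulrC. Qed.

Lemma ipDZl m n c (A B C : 'M[R]_(m, n)) : ip (c *: A + B) C = c * ip A C + ip B C.
Proof. by rewrite !ip_tr mulmxDl -scalemxAl mxtraceD mxtraceZ. Qed.

Lemma ipDZr m n c (A B C : 'M[R]_(m, n)) : ip C (c *: A + B) = c * ip C A + ip C B.
Proof. by rewrite ipC ipDZl ![ip _ C]ipC. Qed.

Lemma ip0l m n (A : 'M[R]_(m, n)) : ip 0 A = 0.
Proof. by rewrite /ip big1 // => i _; rewrite big1 // => j _; rewrite mxE mul0r. Qed.

Lemma ip0r m n (A : 'M[R]_(m, n)) : ip A 0 = 0.
Proof. by rewrite ipC ip0l. Qed.

Lemma ipDl m n (A B C : 'M[R]_(m, n)) : ip (A + B) C = ip A C + ip B C.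
Proof. by rewrite -[A]scale1r ipDZl mul1r scale1r. Qed.

Lemma ipDr m n (A B C : 'M[R]_(m, n)) : ip C (A + B) = ip C A + ip C B.
Proof. by rewrite ipC ipDl ![ip _ C]ipC. Qed.

Lemma ipZl m n c (A C : 'M[R]_(m, n)) : ip (c *: A) C = c * ip A C.
Proof. by rewrite -[c *: A]addr0 ipDZl ip0l addr0. Qed.

Lemma ipZr m n c (A C : 'M[R]_(m, n)) : ip C (c *: A) = c * ip C A.
Proof. by rewrite ipC ipZl ipC. Qed.

Lemma ip_mulr m n p (A : 'M[R]_(m, p)) (X : 'M[R]_(m, n)) (Y : 'M[R]_(n, p)) :
  ip A (X *m Y) = ip (A *m Y^T) X.
Proof. by rewrite !ip_tr trmx_mul mulmxA. Qed.

Lemma ip_mull m n p (A : 'M[R]_(m, p)) (X : 'M[R]_(m, n)) (Y : 'M[R]_(n, p)) :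
  ip A (X *m Y) = ip (X^T *m A) Y.
Proof. by rewrite !ip_tr trmx_mul mulmxA mxtrace_mulC mulmxA. Qed.

Lemma ip_ge0 m n (A : 'M[R]_(m, n)) : 0 <= ip A A.
Proof. by apply: sumr_ge0 => i _; apply: sumr_ge0 => j _; rewrite -expr2 sqr_ge0. Qed.

Lemma ip_eq0 m n (A : 'M[R]_(m, n)) : ip A A = 0 -> A = 0.
Proof.
rewrite /ip => /eqP; rewrite psumr_eq0 => [/allP H|i _]; last first.
  by apply: sumr_ge0 => j _; rewrite -expr2 sqr_ge0.
apply/matrixP => i j; rewrite mxE.
have := H i (mem_index_enum _).
rewrite /= psumr_eq0 => [/allP/(_ j (mem_index_enum _))|k _]; last by rewrite -expr2 sqr_ge0.
by rewrite /= -expr2 sqrf_eq0 => /eqP.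
Qed.

Lemma frob_sq m n (A : 'M[R]_(m, n)) : frob A ^+ 2 = ip A A.
Proof.
rewrite /frob sqr_sqrtr; last by apply: sumr_ge0 => i _; apply: sumr_ge0 => j _; rewrite sqr_ge0.
by rewrite /ip; apply: eq_bigr => i _; apply: eq_bigr => j _; rewrite expr2.
Qed.

Lemma ip_delta m n (A : 'M[R]_(m, n)) k l : ip A (delta_mx k l) = A k l.
Proof.
rewrite /ip (bigD1 k) //= (bigD1 l) //= !mxE !eqxx mulr1 big1 ?addr0.
  rewrite big1 ?addr0 // => i /negbTE ik; rewrite big1 // => j _.
  by rewrite mxE ik mulr0.
by move=> j /negbTE jl; rewrite mxE jl andbF mulr0.
Qed.


Lemma derive1_poly0 (p : {poly R}) : derive1 (horner p) 0 = p`_1.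
Proof.
by rewrite -derivE horner_coef0 coef_deriv mulr1n.
Qed.

Definition Pq (a b c d g k : R) : {poly R} :=
  (a%:P + 'X * (b%:P + 'X * c%:P)) * (d%:P + 'X * (g%:P + 'X * k%:P)).

Lemma Pq_coef1 a b c d g k : (Pq a b c d g k)`_1 = a * g + b * d.
Proof.
rewrite /Pq coefM big_ord_recr big_ord1 /=.
rewrite !coefD !coefC !coefXM /= !coefD !coefC !coefXM /=.
by rewrite !addr0 !add0r.
Qed.

Lemma deriv_quad m n (A B C D G K : 'M[R]_(m,n)) (c : R) :
  derive1 (fun t => c * ip (A + t *: B + t^+2 *: C) (D + t *: G + t^+2 *: K)) 0
  = c * (ip A G + ip B D).
Proof.
have -> : (fun t => c * ip (A + t *: B + t^+2 *: C) (D + t *: G + t^+2 *: K))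
  = horner (c *: \sum_i \sum_j Pq (A i j) (B i j) (C i j) (D i j) (G i j) (K i j)).
  apply/funext => t; rewrite hornerZ horner_sum /ip; congr (_ * _).
  apply: eq_bigr => i _; rewrite horner_sum; apply: eq_bigr => j _.
  rewrite /Pq !mxE !hornerE; ring.
rewrite derive1_poly0 coefZ coef_sum /ip -big_split /=; congr (_ * _).
apply: eq_bigr => i _; rewrite coef_sum -big_split /=; apply: eq_bigr => j _.
exact: Pq_coef1.
Qed.


Lemma lin_expand N (L : 'rV[R]_N -> R) :
  (forall c a b, L (c *: a + b) = c * L a + L b) ->
  forall w, L w = \sum_i w 0 i * L (@ebasis R N i).
Proof.
move=> HL w.
have L0 : L 0 = 0.
  have := HL 1 0 0; rewrite scaler0 addr0 mul1r => h.
  by apply: (addrI (L 0)); rewrite addr0 -h.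
have LD : {morph L : a b / a + b >-> a + b}.
  by move=> a b; rewrite -[a]scale1r HL mul1r scale1r.
rewrite {1}(row_sum_delta w) (big_morph L LD L0); apply: eq_bigr => i _.
by rewrite -[_ *: _]addr0 HL L0 addr0.
Qed.

Lemma AAt0 m n (A : 'M[R]_(m, n)) : A *m A^T = 0 -> A = 0.
Proof. by move=> h; apply: ip_eq0; rewrite ip_tr h mxtrace0. Qed.

Lemma gram_unit d k (V : 'M[R]_(d, k)) : \rank V = k -> V^T *m V \in unitmx.
Proof.
move=> hV; rewrite -row_free_unit -kermx_eq0.
set K := kermx _.
have HK : K *m (V^T *m V) = 0 := mulmx_ker _.
have HK2 : K *m V^T = 0.
  apply: AAt0; rewrite trmx_mul trmxK mulmxA -(mulmxA K) HK mul0mx //.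
have fr : row_free V^T by rewrite /row_free mxrank_tr hV.
by rewrite -(mulmx_free_eq0 _ fr) HK2.
Qed.

Lemma full_case d1 d2 k (U : 'M[R]_(d1, k)) (V : 'M[R]_(d2, k)) (M : 'M[R]_(d1, d2)) :
  \rank M = k -> \rank U = k -> \rank V = k ->
  (U *m V^T - M) *m V = 0 -> U^T *m (U *m V^T - M) = 0 -> U *m V^T - M = 0.
Proof.
move=> hM hU hV EV UE.
have MV : M *m V = U *m (V^T *m V).
  by move/eqP: EV; rewrite mulmxBl subr_eq0 -mulmxA => /eqP <-.
have G := gram_unit hV.
have Ueq : U = M *m V *m invmx (V^T *m V) by rewrite MV mulmxK.
have sub1 : (U^T <= M^T)%MS.
  by rewrite Ueq !trmx_mul mulmxA submxMl.
have sub2 : (M^T <= U^T)%MS.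
  by rewrite -(mxrank_leqif_sup sub1).2 !mxrank_tr hU hM.
have [X HX] := submxP sub2.
have Eeq : U *m V^T - M = U *m (V - X)^T.
  by rewrite -[M]trmxK HX trmx_mul trmxK linearB /= mulmxBr.
apply: ip_eq0; rewrite {2}Eeq ip_mull UE ip0l //.
Qed.

Lemma ker_nz d k (U : 'M[R]_(d, k)) : \rank U != k ->
  exists2 a : 'rV[R]_k, a != 0 & a *m U^T = 0.
Proof.
move=> hU; exists (nz_row (kermx U^T)).
  by rewrite nz_row_eq0 kermx_eq0 /row_free mxrank_tr.
by apply/sub_kermxP; exact: nz_row_sub.
Qed.

Lemma rank1_ip m n p (E : 'M[R]_(m, n)) (a b : 'rV[R]_p) k l :
  ip E ((delta_mx k (0 : 'I_1) *m a) *m (delta_mx l (0 : 'I_1) *m b)^T)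
  = (a *m b^T) 0 0 * E k l.
Proof.
rewrite trmx_mul -!mulmxA (mulmxA a) {1}[a *m b^T]mx11_scalar mul_scalar_mx.
by rewrite -scalemxAr trmx_delta mul_delta_mx ipZr ip_delta.
Qed.

Lemma aa_neq0 p (a : 'rV[R]_p) : a != 0 -> (a *m a^T) 0 0 != 0.
Proof.
move=> ha; apply: contra ha => /eqP h; apply/eqP/ip_eq0.
by rewrite ip_tr /mxtrace big_ord1.
Qed.

Lemma neg_choice (c1 b : R) : 0 <= c1 -> b != 0 ->
  exists s, 2 * (s * b) + s ^+ 2 * c1 < 0.
Proof.
move=> hc hb; set t := (c1 + 1)^-1.
have ht : 0 < t by rewrite invr_gt0; lra.
have htc : t * c1 = 1 - t.
  by rewrite /t; field; apply/eqP => h; move: hc; lra.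
have hb2 : 0 < b ^+ 2 by rewrite exprn_even_gt0.
have h := mulr_gt0 hb2 ht.
exists (- b * t).
have -> : 2 * (- b * t * b) + (- b * t) ^+ 2 * c1 = - (b^+2 * t) * (2 - t * c1) by ring.
rewrite htc; nra.
Qed.

End IP.

Section Main.
Variables (R : realType) (d1 d2 r : nat) (M : 'M[R]_(d1, d2)).
Local Notation N := (d1 * r + d2 * r)%N.
Local Notation UU x := (@Uof R d1 d2 r x).
Local Notation VV x := (@Vof R d1 d2 r x).
Local Notation fo := (@fobj R d1 d2 r M).
Local Notation eb i := (@ebasis R N i).

Lemma Uof_lin c (a b : 'rV[R]_N) : UU (c *: a + b) = c *: UU a + UU b.
Proof. by rewrite /Uof linearD linearZ /= linearD linearZ. Qed.
Lemma Vof_lin c (a b : 'rV[R]_N) : VV (c *: a + b) = c *: VV a + VV b.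
Proof. by rewrite /Vof linearD linearZ /= linearD linearZ. Qed.
Lemma Uof_shift (a b : 'rV[R]_N) t : UU (a + t *: b) = UU a + t *: UU b.
Proof. by rewrite addrC Uof_lin addrC. Qed.
Lemma Vof_shift (a b : 'rV[R]_N) t : VV (a + t *: b) = VV a + t *: VV b.
Proof. by rewrite addrC Vof_lin addrC. Qed.
Lemma Uof_pack A B : UU (pack A B) = A.
Proof. by rewrite /Uof /pack row_mxKl mxvecK. Qed.
Lemma Vof_pack A B : VV (pack A B) = B.
Proof. by rewrite /Vof /pack row_mxKr mxvecK. Qed.

Definition Fm x := UU x *m (VV x)^T - M.
Definition Bd x w := UU w *m (VV x)^T + UU x *m (VV w)^T.
Definition hform x a b :=
  ip (Fm x) (UU a *m (VV b)^T + UU b *m (VV a)^T) + ip (Bd x a) (Bd x b).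

Lemma F_shift x w t :
  Fm (x + t *: w) = Fm x + t *: Bd x w + t^+2 *: (UU w *m (VV w)^T).
Proof.
rewrite /Fm /Bd Uof_shift Vof_shift linearD linearZ /= mulmxDl !mulmxDr.
rewrite -!scalemxAl -!scalemxAr scalerA -expr2 scalerDr.
by apply/matrixP => i j; rewrite !mxE; ring.
Qed.

Lemma Bd_shift x v w t : Bd (x + t *: w) v
  = Bd x v + t *: (UU v *m (VV w)^T + UU w *m (VV v)^T) + t^+2 *: 0.
Proof.
rewrite /Bd Uof_shift Vof_shift linearD linearZ /= mulmxDl !mulmxDr scaler0 addr0.
rewrite -!scalemxAl -!scalemxAr.
by apply/matrixP => i j; rewrite !mxE; ring.
Qed.

Lemma pderiv_fobj y i : pderiv fo y i = ip (Fm y) (Bd y (eb i)).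
Proof.
rewrite /pderiv /fobj.
have -> : (fun t => 2^-1 * frob (UU (y + t *: eb i) *m (VV (y + t *: eb i))^T - M) ^+ 2)
  = (fun t => 2^-1 * ip (Fm y + t *: Bd y (eb i) + t^+2 *: (UU (eb i) *m (VV (eb i))^T))
                         (Fm y + t *: Bd y (eb i) + t^+2 *: (UU (eb i) *m (VV (eb i))^T))).
  by apply/funext => t; rewrite frob_sq -/(Fm _) F_shift.
rewrite deriv_quad [ip (Bd _ _) _]ipC; by field.
Qed.

Lemma hess_entry x i j :
  hessian fo x i j = hform x (eb i) (eb j).
Proof.
rewrite /hessian mxE.
have -> : (fun y => pderiv fo y i) = (fun y => ip (Fm y) (Bd y (eb i))).
  by apply/funext => y; rewrite pderiv_fobj.
rewrite /pderiv.
have -> : (fun t => ip (Fm (x + t *: eb j)) (Bd (x + t *: eb j) (eb i)))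
  = (fun t => 1 * ip (Fm x + t *: Bd x (eb j) + t^+2 *: (UU (eb j) *m (VV (eb j))^T))
     (Bd x (eb i) + t *: (UU (eb i) *m (VV (eb j))^T + UU (eb j) *m (VV (eb i))^T) + t^+2 *: 0)).
  by apply/funext => t; rewrite F_shift Bd_shift mul1r.
by rewrite deriv_quad mul1r /hform [ip (Bd x (eb j)) _]ipC.
Qed.

Lemma Bd_lin x c a b : Bd x (c *: a + b) = c *: Bd x a + Bd x b.
Proof.
rewrite /Bd Uof_lin Vof_lin linearD linearZ /= mulmxDl !mulmxDr -!scalemxAl -!scalemxAr.
by apply/matrixP => i j; rewrite !mxE; ring.
Qed.

Lemma hform_sym x a b : hform x a b = hform x b a.
Proof. by rewrite /hform [UU a *m _ + _]addrC [ip (Bd x a) _]ipC. Qed.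

Lemma hform_lin x v c a b : hform x (c *: a + b) v = c * hform x a v + hform x b v.
Proof.
rewrite /hform Bd_lin ipDZl.
have -> : UU (c *: a + b) *m (VV v)^T + UU v *m (VV (c *: a + b))^T
  = c *: (UU a *m (VV v)^T + UU v *m (VV a)^T) + (UU b *m (VV v)^T + UU v *m (VV b)^T).
  rewrite Uof_lin Vof_lin linearD linearZ /= mulmxDl !mulmxDr -!scalemxAl -!scalemxAr.
  by apply/matrixP => i j; rewrite !mxE; ring.
rewrite ipDZr; ring.
Qed.

Lemma quad_form x (w : 'rV[R]_N) : (w *m hessian fo x *m w^T) 0 0 = hform x w w.
Proof.
rewrite (@lin_expand _ _ (fun a => hform x a w)); last by move=> c a b; rewrite hform_lin.
rewrite mxE; apply: eq_bigr => i _; rewrite hform_sym.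
rewrite (@lin_expand _ _ (fun a => hform x a (eb i))); last by move=> c a b; rewrite hform_lin.
rewrite !mxE mulr_sumr mulr_suml; apply: eq_bigr => j _.
rewrite (hess_entry x j i); ring.
Qed.

Lemma hess_sym x : (hessian fo x)^T = hessian fo x.
Proof. by apply/matrixP => i j; rewrite mxE (hess_entry x j i) (hess_entry x i j) hform_sym. Qed.

Lemma grad_zero x : stationary_point fo x -> forall w, ip (Fm x) (Bd x w) = 0.
Proof.
move=> hs w.
rewrite (@lin_expand _ _ (fun a => ip (Fm x) (Bd x a))); last first.
  by move=> c a b; rewrite Bd_lin ipDZr.
apply: big1 => i _.
have := congr1 (fun v : 'rV_N => v 0 i) hs; rewrite /= !mxE pderiv_fobj => ->.
by rewrite mulr0.
Qed.

Lemma hform_pack U V dU dV :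
  hform (pack U V) (pack dU dV) (pack dU dV)
  = 2 * ip (U *m V^T - M) (dU *m dV^T)
    + ip (dU *m V^T + U *m dV^T) (dU *m V^T + U *m dV^T).
Proof. rewrite /hform /Bd /Fm !Uof_pack !Vof_pack ipDr; ring. Qed.

Lemma defU U V (a : 'rV[R]_r) k l : a != 0 -> a *m U^T = 0 ->
  (U *m V^T - M) k l != 0 -> exists w, hform (pack U V) w w < 0.
Proof.
move=> ha haU hE.
set ck : 'M[R]_(d1, 1) := delta_mx k 0; set cl : 'M[R]_(d2, 1) := delta_mx l 0.
have [s hs] := neg_choice (ip_ge0 (ck *m a *m V^T)) (mulf_neq0 (aa_neq0 ha) hE).
exists (pack (s *: (ck *m a)) (cl *m a)).
rewrite hform_pack.
have -> : U *m (cl *m a)^T = 0.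
  by rewrite trmx_mul mulmxA -[U *m a^T]trmxK trmx_mul trmxK haU trmx0 mul0mx.
rewrite addr0 -!scalemxAl ipZr rank1_ip ipZl ipZr.
apply: le_lt_trans hs; rewrite le_eqVlt; apply/orP; left; apply/eqP; ring.
Qed.

Lemma defV U V (a : 'rV[R]_r) k l : a != 0 -> a *m V^T = 0 ->
  (U *m V^T - M) k l != 0 -> exists w, hform (pack U V) w w < 0.
Proof.
move=> ha haV hE.
set ck : 'M[R]_(d1, 1) := delta_mx k 0; set cl : 'M[R]_(d2, 1) := delta_mx l 0.
have [s hs] := neg_choice (ip_ge0 (U *m (cl *m a)^T)) (mulf_neq0 (aa_neq0 ha) hE).
exists (pack (ck *m a) (s *: (cl *m a))).
rewrite hform_pack.
have -> : ck *m a *m V^T = 0 by rewrite -mulmxA haV mulmx0.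
rewrite add0r !linearZ /= ipZr rank1_ip ipZl ipZr.
apply: le_lt_trans hs; rewrite le_eqVlt; apply/orP; left; apply/eqP; ring.
Qed.

End Main.

Theorem lemma3p2 (R : realType) (d1 d2 r : nat) (Mstar : 'M[R]_(d1, d2))
  (eps : R) (U : 'M[R]_(d1, r)) (V : 'M[R]_(d2, r)) :
  \rank Mstar = r ->
  0 < eps ->
  stationary_point (@fobj R d1 d2 r Mstar) (pack U V) ->
  frob (U^T *m U - V^T *m V) <= eps ->
  frob (U *m V^T - Mstar) <= eps \/ strict_saddle (@fobj R d1 d2 r Mstar) (pack U V).
Proof.
move=> hrk heps hstat hbal.
set E := U *m V^T - Mstar.
have hg := grad_zero hstat.
have FE : Fm Mstar (pack U V) = E by rewrite /Fm !Uof_pack !Vof_pack.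
have EV : E *m V = 0.
  apply: ip_eq0; have := hg (pack (E *m V) 0).
  by rewrite FE /Bd !Uof_pack !Vof_pack trmx0 mulmx0 addr0 ip_mulr trmxK.
have UE : U^T *m E = 0.
  apply: ip_eq0; have := hg (pack 0 (E^T *m U)).
  by rewrite FE /Bd !Uof_pack !Vof_pack mul0mx add0r trmx_mul trmxK ip_mull.
case: (eqVneq E 0) => [E0|En0].
  left; rewrite -/E E0.
  have : frob (0 : 'M[R]_(d1, d2)) ^+ 2 = 0 by rewrite frob_sq ip0l.
  by move/eqP; rewrite sqrf_eq0 => /eqP ->; exact: ltW.
right; split => //.
suff [w hw] : exists w, hform Mstar (pack U V) w w < 0.
  apply: (sym_neg (hess_sym _ _)); rewrite quad_form; exact: hw.
have [k [l hkl]] : exists k l, E k l != 0.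
  case: (boolP [exists k, [exists l, E k l != 0]]) => [/existsP [k /existsP [l h]]|/existsPn h].
    by exists k, l.
  exfalso; move/eqP: (En0); apply; apply/matrixP => k l.
  by move/existsPn/(_ l): (h k); rewrite negbK => /eqP ->; rewrite mxE.
case hU: (\rank U == r).
  case hV: (\rank V == r).
    exfalso; move/eqP: En0; apply; exact: full_case hrk (eqP hU) (eqP hV) EV UE.
  have [a ha haV] := ker_nz (negbT hV); exact: defV ha haV hkl.
have [a ha haU] := ker_nz (negbT hU); exact: defU ha haU hkl.
Qed.
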